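(* Let $G$ be a group and $n\ge1$. Then $\bigcup_{i=1}^n\operatorname{Spec}_R(G)^{(i)}\subseteq\operatorname{Spec}_R(G^n)$. Equality holds if $\operatorname{Aut}(G^n)=\operatorname{Aut}(G)\wr S_n$, i.e. if every automorphism of $G^n$ is of the form $(g_1,\dots,g_n)\mapsto(\phi_1(g_{\sigma(1)}),\dots,\phi_n(g_{\sigma(n)}))$ for some $\phi_1,\dots,\phi_n\in\operatorname{Aut}(G)$ and $\sigma\in S_n$.
   Context: $R(\psi)$ is the Reidemeister number of an endomorphism $\psi$ (number of classes of the relation $x\sim gx\psi(g)^{-1}$), and $\operatorname{Spec}_R(A)=\{R(\psi)\mid\psi\in\operatorname{Aut}(A)\}$. For $S\subseteq\mathbb{N}\cup\{\infty\}$, $S^{(i)}=\{a_1\cdots a_i\mid a_j\in S\}$ is the $i$-fold product set, with the convention $a\cdot\infty=\infty$. *)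

(* Defs.v *)
From mathcomp Require Import all_boot all_fingroup.
Set Implicit Arguments. Unset Strict Implicit. Unset Printing Implicit Defensive.

Definition is_group (G : Type) (mul : G -> G -> G) (one : G) (inv : G -> G) :=
  [/\ (forall x y z, mul x (mul y z) = mul (mul x y) z),
      (forall x, mul one x = x), (forall x, mul x one = x),
      (forall x, mul (inv x) x = one) & (forall x, mul x (inv x) = one)].

Section Reid.
Variables (G : Type) (mul : G -> G -> G) (inv : G -> G).

Definition is_hom (f : G -> G) := forall x y, f (mul x y) = mul (f x) (f y).
Definition is_aut (f : G -> G) := is_hom f /\ bijective f.

Definition twisted (psi : G -> G) (x y : G) :=
  exists g, y = mul (mul g x) (inv (psi g)).

Definition n_classes (psi : G -> G) (n : nat) :=
  exists reps : 'I_n -> G,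
    (forall i j, twisted psi (reps i) (reps j) -> i = j) /\
    (forall x, exists i, twisted psi x (reps i)).

(* Reidemeister number R(psi) = r, with r : option nat (None = infinity) *)
Definition reid (psi : G -> G) (r : option nat) :=
  match r with
  | Some n => n_classes psi n
  | None => forall n, ~ n_classes psi n
  end.

Definition SpecR (r : option nat) := exists psi, is_aut psi /\ reid psi r.
End Reid.

Definition mulinf (a b : option nat) : option nat :=
  match a, b with
  | Some x, Some y => Some (x * y)
  | _, _ => None
  end.

(* S^(i) = { a_1 ... a_i | a_j in S } *)
Definition prodset (S : option nat -> Prop) (i : nat) (r : option nat) :=
  exists s : seq (option nat),
    size s = i /\ (forall j, j < size s -> S (nth None s j)) /\ r = foldr mulinf (Some 1) s.

(* pointwise group operations on G^n = 'I_n -> G *)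
Definition pmul (G : Type) (mul : G -> G -> G) (n : nat) (x y : 'I_n -> G) : 'I_n -> G :=
  fun k => mul (x k) (y k).
Definition pinv (G : Type) (inv : G -> G) (n : nat) (x : 'I_n -> G) : 'I_n -> G :=
  fun k => inv (x k).

Definition aut_wreath (G : Type) (mul : G -> G -> G) (n : nat) :=
  forall Phi : ('I_n -> G) -> ('I_n -> G), is_aut (@pmul G mul n) Phi ->
    exists (phi : 'I_n -> G -> G) (s : {perm 'I_n}),
      (forall k, is_aut mul (phi k)) /\ (forall x k, Phi x k = phi k (x (s k))).

(* Main.v *)
Require Import Defs.
From mathcomp Require Import all_boot all_fingroup.
From Stdlib Require Import Classical IndefiniteDescription FunctionalExtensionality.
Set Implicit Arguments. Unset Strict Implicit. Unset Printing Implicit Defensive.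

Definition ncE (X : Type) (E : X -> X -> Prop) (n : nat) :=
  exists reps : 'I_n -> X,
    (forall i j, E (reps i) (reps j) -> i = j) /\ (forall x, exists i, E x (reps i)).
Definition rdE (X : Type) (E : X -> X -> Prop) (r : option nat) :=
  match r with Some n => ncE E n | None => forall n, ~ ncE E n end.
Definition equivR (X : Type) (E : X -> X -> Prop) :=
  (forall x, E x x) /\ (forall x y, E x y -> E y x) /\ (forall x y z, E x y -> E y z -> E x z).

Lemma rdE_ex (X : Type) (E : X -> X -> Prop) : exists r, rdE E r.
Proof.
case: (classic (exists n, ncE E n)) => [[n Hn]|H]; first by exists (Some n).
exists None => n Hn; apply: H; by exists n.
Qed.

Lemma ncE_uniq_le (X : Type) (E : X -> X -> Prop) a b : equivR E ->
  ncE E a -> ncE E b -> a <= b.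
Proof.
move=> [Er [Es Et]] [ra [ia ca]] [rb [ib cb]].
pose f (i : 'I_a) : 'I_b := proj1_sig (constructive_indefinite_description _ (cb (ra i))).
have Hf i : E (ra i) (rb (f i)) by rewrite /f; case: constructive_indefinite_description.
have injf : injective f.
  move=> i j eq; apply: ia; apply: Et (Hf i) _; rewrite eq; exact: Es (Hf j).
by have := @leq_card _ _ f injf; rewrite !card_ord.
Qed.

Lemma rdE_uniq (X : Type) (E : X -> X -> Prop) r1 r2 : equivR E ->
  rdE E r1 -> rdE E r2 -> r1 = r2.
Proof.
move=> eqv; case: r1 => [a|]; case: r2 => [b|] //= H1 H2.
- by congr Some; apply/eqP; rewrite eqn_leq !(ncE_uniq_le eqv H1 H2, ncE_uniq_le eqv H2 H1).
- by case: (H2 a).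
- by case: (H1 b).
Qed.

Lemma ncE_transport (X Y : Type) (E : X -> X -> Prop) (E' : Y -> Y -> Prop)
  (f : X -> Y) (g : Y -> X) : (forall y, f (g y) = y) ->
  (forall x x', E x x' <-> E' (f x) (f x')) -> forall n, ncE E n <-> ncE E' n.
Proof.
move=> fg Hf n; split => [[r [ir cr]]|[r [ir cr]]].
- exists (f \o r); split => [i j /Hf|y]; first exact: ir.
  have [i Hi] := cr (g y); exists i => /=; rewrite -{1}(fg y); exact/Hf.
- exists (g \o r); split => [i j /Hf|x]; first by rewrite !fg; exact: ir.
  have [i Hi] := cr (f x); exists i => /=; apply/Hf; by rewrite fg.
Qed.

Lemma rdE_transport (X Y : Type) (E : X -> X -> Prop) (E' : Y -> Y -> Prop)
  (f : X -> Y) (g : Y -> X) : (forall y, f (g y) = y) ->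
  (forall x x', E x x' <-> E' (f x) (f x')) -> forall r, rdE E' r -> rdE E r.
Proof.
move=> fg Hf [n|] /=; first by move/(ncE_transport fg Hf).
by move=> H m /(ncE_transport fg Hf); apply: H.
Qed.

Lemma ncT (X : Type) (E : X -> X -> Prop) (T : finType) (reps : T -> X) :
  (forall i j, E (reps i) (reps j) -> i = j) -> (forall x, exists i, E x (reps i)) ->
  ncE E #|T|.
Proof.
move=> ir cr; exists (reps \o enum_val); split => [i j /ir /enum_val_inj //|x].
have [t Ht] := cr x; exists (enum_rank t) => /=; by rewrite enum_rankK.
Qed.

Lemma cover_nc (X : Type) (E : X -> X -> Prop) : equivR E ->
  forall N (f : 'I_N -> X), (forall x, exists i, E x (f i)) -> exists m, ncE E m.
Proof.
move=> [Er [Es Et]]; elim=> [|N IH] f cf.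
  exists 0, f; split; [by case | exact: cf].
case: (classic (forall i j, E (f i) (f j) -> i = j)) => [H|]; first by exists N.+1, f.
move=> /not_all_ex_not [i]; move=> /not_all_ex_not [j] H; have [Eij nij] := imply_to_and _ _ H.
apply: (IH (f \o lift i)) => x; have [m Hm] := cf x.
case: (unliftP i m) => [m' eqm|eqm]; first by exists m'; rewrite /= -eqm.
case: (unliftP i j) => [j' eqj|eqj]; last by case: nij; rewrite eqj.
exists j' => /=; rewrite -eqj; apply: Et Hm _; by rewrite eqm.
Qed.

Definition prodR (A B : Type) (EA : A -> A -> Prop) (EB : B -> B -> Prop) (x y : A * B) :=
  EA x.1 y.1 /\ EB x.2 y.2.

Lemma rdE_prod (A B : Type) (EA : A -> A -> Prop) (EB : B -> B -> Prop) (a0 : A) (b0 : B) :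
  equivR EA -> equivR EB -> forall ra rb, rdE EA ra -> rdE EB rb ->
  rdE (prodR EA EB) (mulinf ra rb).
Proof.
move=> eA eB ra rb; case: ra => [a|] /= Ha.
  case: rb => [b|] /= Hb.
  - case: Ha => [fa [ia ca]]; case: Hb => [fb [ib cb]].
    have := @ncT _ (prodR EA EB) _ (fun p : 'I_a * 'I_b => (fa p.1, fb p.2)).
    rewrite card_prod !card_ord; apply.
      by move=> [i j] [i' j'] [/= /ia -> /ib ->].
    move=> [x y]; have [i Hi] := ca x; have [j Hj] := cb y; by exists (i, j).
  - move=> N [r [ir cr]].
    have cov : forall y, exists i, EB y ((fun i => (r i).2) i).
      move=> y; have [i [_ Hi]] := cr (a0, y); by exists i.
    have [m Hm] := @cover_nc _ _ eB N _ cov; exact: Hb Hm.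
- move=> _ N [r [ir cr]].
  have cov : forall x, exists i, EA x ((fun i => (r i).1) i).
    move=> x; have [i [Hi _]] := cr (x, b0); by exists i.
  have [m Hm] := @cover_nc _ _ eA N _ cov; exact: Ha Hm.
Qed.


Section Grp.
Context {G : Type} {mul : G -> G -> G} {one : G} {inv : G -> G}.
Local Notation "x * y" := (mul x y).
Local Notation "x ^-1" := (inv x).

Lemma gA (HG : is_group mul one inv) x y z : x * (y * z) = (x * y) * z.
Proof. by case: HG. Qed.
Lemma g1l (HG : is_group mul one inv) x : one * x = x.
Proof. by case: HG. Qed.
Lemma g1r (HG : is_group mul one inv) x : x * one = x.
Proof. by case: HG. Qed.
Lemma gVl (HG : is_group mul one inv) x : x^-1 * x = one.
Proof. by case: HG. Qed.
Lemma gVr (HG : is_group mul one inv) x : x * x^-1 = one.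
Proof. by case: HG. Qed.
Lemma gKl (HG : is_group mul one inv) x y : x^-1 * (x * y) = y.
Proof. by rewrite (gA HG) (gVl HG) (g1l HG). Qed.
Lemma gKVl (HG : is_group mul one inv) x y : x * (x^-1 * y) = y.
Proof. by rewrite (gA HG) (gVr HG) (g1l HG). Qed.
Lemma gKr (HG : is_group mul one inv) x y : (y * x) * x^-1 = y.
Proof. by rewrite -(gA HG) (gVr HG) (g1r HG). Qed.
Lemma gKVr (HG : is_group mul one inv) x y : (y * x^-1) * x = y.
Proof. by rewrite -(gA HG) (gVl HG) (g1r HG). Qed.
Lemma ginv_uniq (HG : is_group mul one inv) x y : x * y = one -> y = x^-1.
Proof. by move=> H; rewrite -(gKl HG x y) H (g1r HG). Qed.
Lemma ginvM (HG : is_group mul one inv) x y : (x * y)^-1 = y^-1 * x^-1.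
Proof.
symmetry; apply: (ginv_uniq HG).
by rewrite -(gA HG) (gA HG y) (gVr HG) (g1l HG) (gVr HG).
Qed.
Lemma ginvK (HG : is_group mul one inv) x : (x^-1)^-1 = x.
Proof. by symmetry; apply: (ginv_uniq HG); rewrite (gVl HG). Qed.
Lemma ginv1 (HG : is_group mul one inv) : one^-1 = one.
Proof. by symmetry; apply: (ginv_uniq HG); rewrite (g1l HG). Qed.
Lemma hom1 (HG : is_group mul one inv) f : is_hom mul f -> f one = one.
Proof.
move=> hf; have := hf one one; rewrite (g1l HG) => H.
by rewrite -(gKl HG (f one) (f one)) -H (gVl HG).
Qed.
Lemma homV (HG : is_group mul one inv) f : is_hom mul f -> forall x, f (x^-1) = (f x)^-1.
Proof.
move=> hf x; apply: (ginv_uniq HG); by rewrite -hf (gVr HG) (hom1 HG hf).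
Qed.

Lemma tw_equiv (HG : is_group mul one inv) psi : is_hom mul psi ->
  equivR (twisted mul inv psi).
Proof.
move=> hp; split; [|split].
- move=> x; exists one; by rewrite (hom1 HG hp) (ginv1 HG) (g1l HG) (g1r HG).
- move=> x y [g ->]; exists g^-1.
  by rewrite (homV HG hp) (ginvK HG) (gA HG) (gKl HG) (gKVr HG).
- move=> x y z [g ->] [h ->]; exists (h * g).
  by rewrite hp (ginvM HG) !(gA HG).
Qed.
End Grp.

Lemma pgroup (G : Type) (mul : G -> G -> G) (one : G) (inv : G -> G) n :
  is_group mul one inv -> is_group (@pmul G mul n) (fun _ => one) (@pinv G inv n).
Proof.
move=> HG; split => *; apply: functional_extensionality => k; rewrite /pmul /pinv /=.
- exact: (gA HG).
- exact: (g1l HG).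
- exact: (g1r HG).
- exact: (gVl HG).
- exact: (gVr HG).
Qed.

Lemma twP (G : Type) (mul : G -> G -> G) (inv : G -> G) n F (x y : 'I_n -> G) :
  twisted (@pmul G mul n) (@pinv G inv n) F x y <->
  exists g, forall k, y k = mul (mul (g k) (x k)) (inv (F g k)).
Proof.
split => [[g ->]|[g Hg]]; exists g; first by [].
by apply: functional_extensionality => k; rewrite Hg.
Qed.

Definition W (G : Type) n (s : 'I_n -> 'I_n) (phi : 'I_n -> G -> G) (x : 'I_n -> G) : 'I_n -> G :=
  fun k => phi k (x (s k)).

Lemma W_hom (G : Type) (mul : G -> G -> G) n s (phi : 'I_n -> G -> G) :
  (forall k, is_hom mul (phi k)) -> is_hom (@pmul G mul n) (W s phi).
Proof.
move=> H x y; apply: functional_extensionality => k; by rewrite /W /pmul H.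
Qed.


Lemma split_lem (G : Type) (mul : G -> G -> G) (one : G) (inv : G -> G)
  (HG : is_group mul one inv) n (s : 'I_n.+1 -> 'I_n.+1) (phi : 'I_n.+1 -> G -> G)
  (s' : 'I_n -> 'I_n) (phi' : 'I_n -> G -> G) :
  (forall k, is_hom mul (phi k)) -> (forall l, is_hom mul (phi' l)) ->
  s ord_max = ord_max -> (forall l, s (lift ord_max l) = lift ord_max (s' l)) ->
  (forall l a, phi (lift ord_max l) a = phi' l a) ->
  forall r1 r2, rdE (twisted mul inv (phi ord_max)) r1 ->
  rdE (twisted (@pmul G mul n) (@pinv G inv n) (W s' phi')) r2 ->
  rdE (twisted (@pmul G mul n.+1) (@pinv G inv n.+1) (W s phi)) (mulinf r1 r2).
Proof.
move=> hp hp' sm sl phil r1 r2 H1 H2.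
have eq1 := tw_equiv HG (hp ord_max).
have eq2 := tw_equiv (pgroup n HG) (W_hom s' hp').
have := rdE_prod one (fun _ : 'I_n => one) eq1 eq2 H1 H2.
apply: (@rdE_transport _ _ _ _ (fun x => (x ord_max, fun l => x (lift ord_max l)))
   (fun p k => match unlift ord_max k with Some l => p.2 l | None => p.1 end)).
  case=> a b /=; rewrite unlift_none; congr pair; apply: functional_extensionality => l.
  by rewrite liftK.
move=> x x'; rewrite twP; split.
  case=> g Hg; split => /=.
    exists (g ord_max); by rewrite Hg /W sm.
  apply/twP; exists (fun l => g (lift ord_max l)) => l; by rewrite Hg /W sl phil.
case=> /= [[g1 Hg1] /twP [g2 Hg2]].
exists (fun k => match unlift ord_max k with Some l => g2 l | None => g1 end) => k.
case: (unliftP ord_max k) => [l ->|->].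
  by rewrite Hg2 /W sl !liftK phil.
by rewrite Hg1 /W sm unlift_none.
Qed.

Lemma elim_lem (G : Type) (mul : G -> G -> G) (one : G) (inv : G -> G)
  (HG : is_group mul one inv) n (s : 'I_n.+2 -> 'I_n.+2) (phi : 'I_n.+2 -> G -> G)
  (s' : 'I_n.+1 -> 'I_n.+1) (phi' : 'I_n.+1 -> G -> G) (jl : 'I_n.+1) :
  (forall k, is_hom mul (phi k)) ->
  s (lift ord_max jl) = ord_max ->
  s ord_max = lift ord_max (s' jl) ->
  (forall l, l != jl -> s (lift ord_max l) = lift ord_max (s' l)) ->
  (forall a, phi' jl a = phi (lift ord_max jl) (phi ord_max a)) ->
  (forall l a, l != jl -> phi' l a = phi (lift ord_max l) a) ->
  forall r, rdE (twisted (@pmul G mul n.+1) (@pinv G inv n.+1) (W s' phi')) r ->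
  rdE (twisted (@pmul G mul n.+2) (@pinv G inv n.+2) (W s phi)) r.
Proof.
move=> hp sj sk sl phij phil.
apply: (@rdE_transport _ _ _ _
   (fun x l => if l == jl then mul (x (lift ord_max jl)) (phi (lift ord_max jl) (x ord_max)) else x (lift ord_max l))
   (fun y m => match unlift ord_max m with Some l => y l | None => one end)).
  move=> y; apply: functional_extensionality => l.
  case: eqP => [->|_]; rewrite  liftK ?unlift_none //.
  by rewrite (hom1 HG (hp _)) (g1r HG).
move=> x y; rewrite !twP; split.
  case=> g Hg; exists (fun l => g (lift ord_max l)) => l.
  case: (eqVneq l jl) => [->|nl].
    rewrite /W phij -sk !Hg /W sj.
    rewrite !hp (homV HG (hp _)) !(gA HG) (gKVr HG) //.
  by rewrite /W Hg /W sl // phil.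
case=> g' Hg'.
exists (fun m => match unlift ord_max m with Some l => g' l
   | None => mul (mul (y ord_max) (phi ord_max (g' (s' jl)))) (inv (x ord_max)) end) => m.
case: (unliftP ord_max m) => [l ->|->].
  rewrite /W; case: (eqVneq l jl) => [->|nl].
    have := Hg' jl; rewrite eqxx /W phij => E.
    rewrite sj unlift_none.
    rewrite -[y (lift ord_max jl)](gKr HG (phi (lift ord_max jl) (y ord_max))) E.
    by rewrite !hp !(homV HG (hp _)) !(ginvM HG) !(ginvK HG) !(gA HG).
  have := Hg' l; rewrite (negbTE nl) /W => ->.
  by rewrite sl // liftK phil.
by rewrite /W sk liftK (gKVr HG) (gKr HG).
Qed.


Lemma W_bij (G : Type) n (s : 'I_n -> 'I_n) (phi : 'I_n -> G -> G) (sinj : injective s) :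
  (forall k, bijective (phi k)) -> bijective (W s phi).
Proof.
move=> hb.
have H k : exists g, cancel (phi k) g /\ cancel g (phi k).
  by case: (hb k) => g h1 h2; exists g.
pose pi k := proj1_sig (constructive_indefinite_description _ (H k)).
have pi1 k : cancel (phi k) (pi k).
  by rewrite /pi; case: constructive_indefinite_description => g [].
have pi2 k : cancel (pi k) (phi k).
  by rewrite /pi; case: constructive_indefinite_description => g [].
exists (fun y m => pi (invF sinj m) (y (invF sinj m))).
  move=> x; apply: functional_extensionality => m; by rewrite /W f_invF pi1.
move=> y; apply: functional_extensionality => k; by rewrite /W invF_f pi2.
Qed.

Lemma base_lem (G : Type) (mul : G -> G -> G) (one : G) (inv : G -> G)
  (s : 'I_1 -> 'I_1) (phi : 'I_1 -> G -> G) r :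
  rdE (twisted mul inv (phi ord0)) r ->
  rdE (twisted (@pmul G mul 1) (@pinv G inv 1) (W s phi)) r.
Proof.
apply: (@rdE_transport _ _ _ _ (fun x => x ord0) (fun a _ => a)) => // x y.
rewrite twP; split.
  case=> g Hg; exists (g ord0); rewrite Hg /W; by have -> : s ord0 = ord0 by exact: ord1.
case=> g Hg; exists (fun _ => g) => k; have -> : k = ord0 by exact: ord1.
by rewrite Hg.
Qed.

Lemma lift_odflt n (h : 'I_n.+1) (d : 'I_n) m : m != h -> lift h (odflt d (unlift h m)) = m.
Proof. by move=> nm; case: (unliftP h m) => [l ->|eqm] //; rewrite eqm eqxx in nm. Qed.

Lemma aut_comp (G : Type) (mul : G -> G -> G) f g :
  is_aut mul f -> is_aut mul g -> is_aut mul (fun a => f (g a)).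
Proof.
move=> [hf bf] [hg bg]; split; first by move=> x y; rewrite hg hf.
exact: (bij_comp bf bg).
Qed.

Lemma aut_id (G : Type) (mul : G -> G -> G) : is_aut mul id.
Proof. by split => // ; exists id. Qed.


Lemma WLd (G : Type) (mul : G -> G -> G) (one : G) (inv : G -> G)
  (HG : is_group mul one inv) n : forall (s : 'I_n.+1 -> 'I_n.+1) (phi : 'I_n.+1 -> G -> G),
  injective s -> (forall k, is_aut mul (phi k)) ->
  exists l : seq (option nat), 1 <= size l <= n.+1 /\
    (forall j, j < size l -> SpecR mul inv (nth None l j)) /\
    rdE (twisted (@pmul G mul n.+1) (@pinv G inv n.+1) (W s phi)) (foldr mulinf (Some 1) l).
Proof.
elim: n => [|n IH] s phi sinj ha.
  have [r Hr] := rdE_ex (twisted mul inv (phi ord0)).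
  exists [:: r]; split => //; split.
    by move=> [|j] //= _; exists (phi ord0); split.
  apply: base_lem; case: r Hr => [m|] //=; by rewrite muln1.
have hh k := (ha k).1.
case: (eqVneq (s ord_max) ord_max) => [sm|sm].
  pose s' (l : 'I_n.+1) := odflt ord0 (unlift ord_max (s (lift ord_max l))).
  have s'P l : lift ord_max (s' l) = s (lift ord_max l).
    by apply: lift_odflt; rewrite -{2}sm (inj_eq sinj) eq_sym neq_lift.
  have s'inj : injective s'.
    move=> a b E; apply: (@lift_inj _ ord_max); apply: sinj; by rewrite -!s'P E.
  have [l' [sz' [sp' rd']]] := IH s' (fun l => phi (lift ord_max l)) s'inj (fun l => ha _).
  have [r Hr] := rdE_ex (twisted mul inv (phi ord_max)).
  exists (r :: l'); split; first by move: sz' => /andP [_ h]; rewrite /= ltnS h.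
  split.
    move=> [|j] /=; first by move=> _; exists (phi ord_max); split.
    rewrite ltnS; exact: sp'.
  exact: (@split_lem G mul one inv HG n.+1 s phi s' (fun l => phi (lift ord_max l))
            hh (fun l => (ha _).1) sm (fun l => esym (s'P l)) (fun l a => erefl) _ _ Hr rd').
pose j := invF sinj ord_max.
have sj : s j = ord_max := f_invF sinj ord_max.
have jm : j != ord_max.
  apply/negP => /eqP E; have X : s ord_max = ord_max by rewrite -{1}E sj.
  by rewrite X eqxx in sm.
pose jl := odflt ord0 (unlift ord_max j).
have jlP : lift ord_max jl = j := lift_odflt _ jm.
pose sig (l : 'I_n.+1) := if l == jl then ord_max else lift ord_max l.
pose s' l := odflt ord0 (unlift ord_max (s (sig l))).
have s'P l : lift ord_max (s' l) = s (sig l).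
  apply: lift_odflt; rewrite -sj (inj_eq sinj) /sig; case: (eqVneq l jl) => [_|nl].
    by rewrite eq_sym.
  by rewrite -jlP (inj_eq (@lift_inj _ _)).
have siginj : injective sig.
  move=> a b; rewrite /sig; case: eqP => [->|na]; case: eqP => [->|nb] //.
  - by move=> E; have := neq_lift ord_max b; rewrite -E eqxx.
  - by move=> E; have := neq_lift ord_max a; rewrite E eqxx.
  - exact: lift_inj.
have s'inj : injective s'.
  move=> a b E; apply: siginj; apply: (sinj); by rewrite -!s'P E.
pose phi' l := if l == jl then (fun a => phi j (phi ord_max a)) else phi (lift ord_max l).
have ha' l : is_aut mul (phi' l).
  rewrite /phi'; case: eqP => _; [exact: aut_comp | exact: ha].
have [l' [sz' [sp' rd']]] := IH s' phi' s'inj ha'.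
exists l'; split; first by move: sz' => /andP [a b]; rewrite a /= leqW.
split => //.
apply: (@elim_lem G mul one inv HG n s phi s' phi' jl) rd' => //.
- by rewrite jlP.
- by rewrite s'P /sig eqxx.
- by move=> l nl; rewrite s'P /sig (negbTE nl).
- by move=> a; rewrite /phi' eqxx jlP.
- by move=> l a nl; rewrite /phi' (negbTE nl).
Qed.


Lemma lift_max_neq n (x : 'I_n) : lift ord_max x = ord_max -> False.
Proof. by move=> E; have := neq_lift ord_max x; rewrite E eqxx. Qed.

Lemma WLc (G : Type) (mul : G -> G -> G) (one : G) (inv : G -> G)
  (HG : is_group mul one inv) n : forall l : seq (option nat), 1 <= size l <= n.+1 ->
  (forall j, j < size l -> SpecR mul inv (nth None l j)) ->
  exists (s : 'I_n.+1 -> 'I_n.+1) (phi : 'I_n.+1 -> G -> G),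
    injective s /\ (forall k, is_aut mul (phi k)) /\
    rdE (twisted (@pmul G mul n.+1) (@pinv G inv n.+1) (W s phi)) (foldr mulinf (Some 1) l).
Proof.
elim: n => [|n IH] l hl sp.
  case: l hl sp => [|r [|? ?]] //= _ sp.
  have [psi [hpsi Hr]] := sp 0 isT.
  exists id, (fun _ => psi); split => //; split => //.
  clear sp; apply: (base_lem one); case: r Hr => [m|] /= Hr; [by rewrite muln1 | exact Hr].
case: (eqVneq (size l) n.+2) => [szl|szl].
  case: l hl sp szl => [|r l'] //= hl sp [szl'].
  have [psi [hpsi Hr]] := sp 0 isT.
  have hl'' : (1 <= size l' <= n.+1)%N. by rewrite szl' leqnn.
  have [s' [phi' [s'inj [ha' rd']]]] := IH l' hl'' (fun j hj => sp j.+1 hj).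
  pose s m := match unlift ord_max m with Some l => lift ord_max (s' l) | None => ord_max end.
  pose phi m := match unlift ord_max m with Some l => phi' l | None => psi end.
  have ha : forall k, is_aut mul (phi k).
    by move=> k; rewrite /phi; case: (unliftP ord_max k) => *; [exact: ha' | exact: hpsi].
  exists s, phi; split.
    move=> a b; rewrite /s; case: (unliftP ord_max a) => [a' ->|->];
      case: (unliftP ord_max b) => [b' ->|->] //.
    - by move/lift_inj/s'inj ->.
    - by move/lift_max_neq.
    - by move/esym/lift_max_neq.
  split => //.
  apply: (@split_lem G mul one inv HG n.+1 s phi s' phi') => //.
  - by move=> k; exact: (ha k).1.
  - by move=> k; exact: (ha' k).1.
  - by rewrite /s unlift_none.
  - by move=> k; rewrite /s liftK.
  - by move=> k a; rewrite /phi liftK.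
  - by rewrite /phi unlift_none; exact Hr.
have hl' : 1 <= size l <= n.+1.
  by case/andP: hl => h1 h2; rewrite h1 -ltnS ltn_neqAle szl h2.
have [s' [phi' [s'inj [ha' rd']]]] := IH l hl' sp.
pose jl : 'I_n.+1 := ord0.
pose s m := match unlift ord_max m with None => lift ord_max (s' jl)
  | Some l => if l == jl then ord_max else lift ord_max (s' l) end.
pose phi m := match unlift ord_max m with None => id | Some l => phi' l end.
have ha : forall k, is_aut mul (phi k).
  by move=> k; rewrite /phi; case: (unliftP ord_max k) => *; [exact: ha' | exact: aut_id].
exists s, phi; split.
  move=> a b; rewrite /s; case: (unliftP ord_max a) => [a' ->|->];
    case: (unliftP ord_max b) => [b' ->|->] //.
  - case: (eqVneq a' jl) => [->|na]; case: (eqVneq b' jl) => [->|nb] //.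
    + by move/esym/lift_max_neq.
    + by move/lift_max_neq.
    + by move/lift_inj/s'inj ->.
  - case: (eqVneq a' jl) => [->|na]; first by move/esym/lift_max_neq.
    by move/lift_inj/s'inj => E; rewrite E eqxx in na.
  - case: (eqVneq b' jl) => [->|nb]; first by move/lift_max_neq.
    by move/lift_inj/s'inj => E; rewrite E eqxx in nb.
split => //.
apply: (@elim_lem G mul one inv HG n s phi s' phi' jl) rd' => //.
- by move=> k; exact: (ha k).1.
- by rewrite /s liftK eqxx.
- by rewrite /s unlift_none.
- by move=> i ni; rewrite /s liftK (negbTE ni).
- by move=> a; rewrite /phi liftK unlift_none.
- by move=> i a ni; rewrite /phi liftK.
Qed.

Theorem mainTheorem6 (G : Type) (mul : G -> G -> G) (one : G) (inv : G -> G)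
  (HG : is_group mul one inv) (n : nat) (hn : 1 <= n) :
  (forall r, (exists i, 1 <= i <= n /\ prodset (SpecR mul inv) i r) ->
     SpecR (@pmul G mul n) (@pinv G inv n) r) /\
  (aut_wreath mul n ->
   forall r, SpecR (@pmul G mul n) (@pinv G inv n) r ->
     exists i, 1 <= i <= n /\ prodset (SpecR mul inv) i r).
Proof.
case: n hn => [//|n] _.
split.
  move=> r [i [/andP [i1 i2] [l [szl [sp ->]]]]].
  have hl : 1 <= size l <= n.+1 by rewrite szl i1 i2.
  have [s [phi [sinj [ha rd]]]] := WLc HG hl sp.
  exists (W s phi); split; last exact: rd.
  split; first exact: (W_hom s (fun k => (ha k).1)).
  apply: W_bij sinj _ => k; exact: (ha k).2.
move=> aw r [psi [apsi rd]].
have [phi [sp [ha Hpsi]]] := aw psi apsi.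
have epsi : psi = W sp phi.
  apply: functional_extensionality => x; apply: functional_extensionality => k.
  by rewrite Hpsi.
have [l [hl [spl rdl]]] := WLd HG (@perm_inj _ sp) ha.
exists (size l); split => //; exists l; split => //; split => //.
apply: (rdE_uniq (tw_equiv (pgroup n.+1 HG) (W_hom sp (fun k => (ha k).1)))).
  rewrite -epsi; exact: rd.
exact: rdl.
Qed.
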